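(* In the online ADDIS setting of the context, assume the null $p$-values are conditionally uniformly conservative, that $\tau_j>\lambda_j\ge\alpha_j$ for all $j$, and that there is $\epsilon>0$ with $\tau_j-\lambda_j>\epsilon$ for all $j$. Let $T_{\mathrm{stop}}$ be a stopping time with respect to $(\mathcal F^t)_{t\ge0}$ with $\mathbb E[T_{\mathrm{stop}}]<\infty$. Then any procedure that maintains $\widehat{\mathrm{FDP}}_{\mathrm{ADDIS}}(t)\le\alpha$ for all $t\in\mathbb N$ satisfies $\mathrm{mFDR}(T_{\mathrm{stop}})=\frac{\mathbb E[|\mathcal H_0\cap R(T_{\mathrm{stop}})|]}{\mathbb E[|R(T_{\mathrm{stop}})|\vee1]}\le\alpha$.
   Context: Let $P_1,P_2,\dots$ be $p$-values for hypotheses $H_1,H_2,\dots$, and let $\mathcal H_0\subseteq\mathbb N$ be the set of indices of true nulls. Fix $\alpha\in(0,1)$. Sequences $\{\alpha_j\},\{\lambda_j\},\{\tau_j\}$ in $[0,1]$ define $S_j=\mathbf 1\{P_j\le\tau_j\}$, $C_j=\mathbf 1\{P_j\le\lambda_j\}$, $R_j=\mathbf 1\{P_j\le\alpha_j\}$, $R(t)=\{j\le t:R_j=1\}$; $\mathcal F^t=\sigma(R_{1:t},C_{1:t},S_{1:t})$, $\mathcal F^0$ trivial; $\alpha_t,\lambda_t,\tau_t$ are $\mathcal F^{t-1}$-measurable. Null $p$-values are conditionally uniformly conservative if for every $t\in\mathcal H_0$ and all $x,\tau\in(0,1)$, $\Pr(P_t/\tau\le x\mid P_t\le\tau,\mathcal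 F^{t-1})\le x$. $\widehat{\mathrm{FDP}}_{\mathrm{ADDIS}}(t)=\big(\sum_{j\le t}\alpha_j\frac{\mathbf 1\{\lambda_j<P_j\le\tau_j\}}{\tau_j-\lambda_j}\big)/(|R(t)|\vee1)$. *)

(* Defs.v *)
From HB Require Import structures.
From mathcomp Require Import all_boot all_order all_algebra.
From mathcomp Require Import all_classical all_reals all_analysis.
Set Implicit Arguments. Unset Strict Implicit. Unset Printing Implicit Defensive.
Import Order.TTheory GRing.Theory Num.Theory.
Local Open Scope classical_set_scope.
Local Open Scope ring_scope.

Section ADDIS.
Context {d : measure_display} {T : measurableType d} {R : realType}.
Variables (p alpha lambda tau : nat -> T -> R).
(* Hypotheses are indexed by j = 1, 2, ...; index 0 is unused. *)

Definition Rev (j : nat) : set T := [set w | p j w <= alpha j w].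
Definition Cev (j : nat) : set T := [set w | p j w <= lambda j w].
Definition Sev (j : nat) : set T := [set w | p j w <= tau j w].

Definition filt_gen (t : nat) : set (set T) :=
  [set A | exists j, (1 <= j <= t)%N /\ (A = Rev j \/ A = Cev j \/ A = Sev j)].

(* F^t; F^0 is the trivial sigma-algebra {set0, setT} *)
Definition filt (t : nat) : set (set T) := <<s filt_gen t>>.

Definition filt_measurable (t : nat) (f : T -> R) : Prop :=
  forall B : set R, measurable B -> filt t (f @^-1` B).

Definition nrej (t : nat) (w : T) : nat :=
  (\sum_(1 <= j < t.+1) nat_of_bool (p j w <= alpha j w)%R)%N.

Definition nfalse_rej (H0 : pred nat) (t : nat) (w : T) : nat :=
  (\sum_(1 <= j < t.+1 | H0 j) nat_of_bool (p j w <= alpha j w)%R)%N.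

Definition FDP_ADDIS (t : nat) (w : T) : R :=
  (\sum_(1 <= j < t.+1)
      alpha j w * ((lambda j w < p j w) && (p j w <= tau j w))%:R
        / (tau j w - lambda j w))
  / Num.max (nrej t w)%:R 1.

End ADDIS.

Section Cond.
Context {d : measure_display} {T : measurableType d} {R : realType}.

(* Conditional uniform conservativeness of the null p-values:
   Pr(P_t / tau <= x | P_t <= tau, F^{t-1}) <= x  a.s., for t in H0 and
   x, tau in (0,1).  Conditional probabilities given the sigma-algebra
   F^{t-1} are expressed through their defining integral property:
   for every B in F^{t-1},
     P({P_t <= x tau} ∩ B) <= x * P({P_t <= tau} ∩ B). *)
Definition cond_unif_conservative (P : probability T R)
    (p alpha lambda tau : nat -> T -> R) (H0 : pred nat) : Prop :=
  forall t : nat, (1 <= t)%N -> H0 t ->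
  forall x tau0 : R, 0 < x < 1 -> 0 < tau0 < 1 ->
  forall B : set T, filt p alpha lambda tau t.-1 B ->
    (P ([set w | (p t w / tau0 <= x)%R] `&` ([set w | (p t w <= tau0)%R] `&` B))
      <= x%:E * P ([set w | (p t w <= tau0)%R] `&` B))%E.

Definition stopping_time (p alpha lambda tau : nat -> T -> R)
    (Ts : T -> nat) : Prop :=
  forall n : nat, filt p alpha lambda tau n [set w | Ts w = n].

End Cond.

(* Main.v *)
Require Import Defs.
From HB Require Import structures.
From mathcomp Require Import all_boot all_order all_algebra.
From mathcomp Require Import all_classical all_reals all_analysis.
From mathcomp Require Import ring lra.
Import Order.TTheory GRing.Theory Num.Theory.
Set Implicit Arguments. Unset Strict Implicit. Unset Printing Implicit Defensive.
Local Open Scope classical_set_scope.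
Local Open Scope ring_scope.

Section Aux.
Context {d : measure_display} {T : measurableType d} {R : realType}.
Variables (p alpha lambda tau : nat -> T -> R).

Local Notation filt := (filt p alpha lambda tau).
Local Notation Rev := (Rev p alpha).
Local Notation Cev := (Cev p lambda).
Local Notation Sev := (Sev p tau).

Lemma filt_mono t t' : (t <= t')%N -> filt t `<=` filt t'.
Proof.
move=> tt'; apply: sub_smallest2r => //.
move=> A [j [/andP[j1 jt] HA]]; exists j; split => //.
by rewrite j1 (leq_trans jt tt').
Qed.

Lemma filt_gen_in t j : (1 <= j <= t)%N ->
  [/\ filt t (Rev j), filt t (Cev j) & filt t (Sev j)].
Proof.
move=> jt; split; apply: sub_gen_smallest; exists j; split => //; tauto.
Qed.

Lemma filt_sigma t : sigma_algebra setT (filt t).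
Proof. exact: smallest_sigma_algebra. Qed.

Lemma filtI t A B : filt t A -> filt t B -> filt t (A `&` B).
Proof.
move=> hA hB.
exact: (@measurableI _ (g_sigma_algebraType (filt_gen p alpha lambda tau t)) A B hA hB).
Qed.

Lemma filtC t A : filt t A -> filt t (~` A).
Proof.
move=> hA.
exact: (@measurableC _ (g_sigma_algebraType (filt_gen p alpha lambda tau t)) A hA).
Qed.

Definition same t w w' := forall i, (1 <= i <= t)%N ->
  [/\ Rev i w <-> Rev i w', Cev i w <-> Cev i w' & Sev i w <-> Sev i w'].

Lemma same_sym t w w' : same t w w' -> same t w' w.
Proof. by move=> h i hi; case: (h i hi) => [[? ?] [? ?] [? ?]]; split; split. Qed.

Lemma filt_sat t A : filt t A -> forall w w', same t w w' -> A w -> A w'.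
Proof.
move=> hA.
suff : filt t `<=` [set A | forall w w', same t w w' -> A w -> A w'].
  by move=> /(_ A hA).
apply: smallest_sub.
- split => //.
  + move=> A' hA' w w' s [_ nA]; split => // Aw'.
    by apply: nA; apply: (hA' w' w) => //; exact: same_sym.
  + move=> F hF w w' s [n _ Fn]; exists n => //; exact: hF s Fn.
- move=> A' [j [jt [->|[->|->]]]] w w' s; by case: (s j jt) => [[? ?] [? ?] [? ?]].
Qed.

Lemma filt_fun_eq t (f : T -> R) w w' : filt_measurable p alpha lambda tau t f ->
  same t w w' -> f w = f w'.
Proof.
move=> hf s.
have := filt_sat (hf _ (measurable_set1 (f w))) s.
by move=> /(_ erefl) /= ->.
Qed.

End Aux.


Section Aux2.
Context {d : measure_display} {T : measurableType d} {R : realType}.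
Variables (p alpha lambda tau : nat -> T -> R).

Local Notation filt := (filt p alpha lambda tau).
Local Notation Rev := (Rev p alpha).
Local Notation Cev := (Cev p lambda).
Local Notation Sev := (Sev p tau).

Hypothesis mp : forall j, (1 <= j)%N -> measurable_fun setT (p j).
Hypothesis pred : forall j, (1 <= j)%N ->
     [/\ filt_measurable p alpha lambda tau j.-1 (alpha j),
         filt_measurable p alpha lambda tau j.-1 (lambda j) &
         filt_measurable p alpha lambda tau j.-1 (tau j)].

Lemma meas_le (f g : T -> R) : measurable_fun setT f -> measurable_fun setT g ->
  measurable [set w | f w <= g w].
Proof.
move=> mf mg.
have := measurable_realfun.measurable_fun_ler mf mg measurableT (Y := [set true]) I.
by rewrite setTI.
Qed.

Lemma meas_lt (f g : T -> R) : measurable_fun setT f -> measurable_fun setT g ->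
  measurable [set w | f w < g w].
Proof.
move=> mf mg.
have := measurable_realfun.measurable_fun_ltr mf mg measurableT (Y := [set true]) I.
by rewrite setTI.
Qed.

Lemma filt_meas_fun t f : filt_measurable p alpha lambda tau t f ->
  (forall A, filt t A -> measurable A) -> measurable_fun setT f.
Proof. by move=> mf hf _ B mB; rewrite setTI; exact: hf (mf B mB). Qed.

Lemma filt_meas t : forall A, filt t A -> measurable A.
Proof.
elim: t => [|t IH].
  apply: smallest_sub; first exact: sigma_algebra_measurable.
  by move=> A [j [/andP[j1 j0] _]]; move: (leq_trans j1 j0).
apply: smallest_sub; first exact: sigma_algebra_measurable.
move=> A [j [/andP[j1 jt] HA]].
have hm : forall f, filt_measurable p alpha lambda tau j.-1 f -> measurable_fun setT f.
  move=> f hf; apply: (filt_meas_fun hf) => B hB; apply: IH.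
  by apply: filt_mono hB; rewrite -ltnS prednK.
case: (pred j1) => ma ml mt.
case: HA => [->|[->|->]]; apply: meas_le; by [exact: mp | exact: hm].
Qed.

Lemma pred_meas j : (1 <= j)%N ->
  [/\ measurable_fun setT (alpha j), measurable_fun setT (lambda j) &
      measurable_fun setT (tau j)].
Proof.
move=> j1; case: (pred j1) => ma ml mt.
by split; apply: filt_meas_fun; try eassumption; exact: filt_meas.
Qed.

Definition trip (i : nat) (w : T) : bool * bool * bool :=
  (`[< Rev i w >], `[< Cev i w >], `[< Sev i w >]).

Definition sig t w : {ffun 'I_t -> bool * bool * bool} :=
  [ffun i : 'I_t => trip i.+1 w].

Lemma sig_same t w w' : sig t w = sig t w' -> same p alpha lambda tau t w w'.
Proof.
move=> e i /andP[i1 it].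
have ilt : (i.-1 < t)%N by rewrite prednK.
have := congr1 (fun f : {ffun 'I_t -> bool * bool * bool} => f (Ordinal ilt)) e; rewrite !ffunE /= prednK //.
rewrite /trip => -[e1 e2 e3].
split; split => H; (apply/asboolP; (rewrite -?e1 -?e2 -?e3 || rewrite ?e1 ?e2 ?e3); exact/asboolP).
Qed.

Definition Atom t (s : {ffun 'I_t -> bool * bool * bool}) := [set w | sig t w = s].
Arguments Atom : clear implicits.

Lemma filt_asbool t A b : filt t A -> filt t [set w | `[< A w >] = b].
Proof.
move=> hA.
have -> : [set w | `[< A w >] = b] = if b then A else ~` A.
  apply/seteqP; split => w /=.
  - by case: b => /= H; [exact/asboolP; rewrite H | move=> Aw; move: H; rewrite asboolT].
  - by case: b => H /=; [exact/asboolP | apply/asboolPn].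
by case: b => //; exact: filtC.
Qed.

Lemma atom_filt t (s : {ffun 'I_t -> bool * bool * bool}) : filt t (Atom t s).
Proof.
have -> : Atom t s = \bigcap_(i in [set: 'I_t])
   ([set w | `[< Rev i.+1 w >] = (s i).1.1] `&` [set w | `[< Cev i.+1 w >] = (s i).1.2]
      `&` [set w | `[< Sev i.+1 w >] = (s i).2]).
  apply/seteqP; split => w /=.
  - by rewrite /Atom /= => <- i _; rewrite ffunE.
  - move=> H; rewrite /Atom /=; apply/ffunP => i; rewrite ffunE.
    case: (H i I) => -[e1 e2 e3] /=; rewrite /trip.
    by move: (s i) e1 e2 e3 => [[b1 b2] b3] /= -> -> ->.
apply: (@fin_bigcap_measurable _ (g_sigma_algebraType (filt_gen p alpha lambda tau t))).
  exact: finite_finset.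
move=> i _.
have it : (1 <= i.+1 <= t)%N by rewrite ltn_ord.
case: (filt_gen_in p alpha lambda tau it) => hR hC hS.
by apply: filtI; [apply: filtI|]; exact: filt_asbool.
Qed.

End Aux2.


Lemma lim_aux (R : realType) (u v x c : R) : 0 < c <= 1 -> 0 <= x -> 0 <= v ->
  (forall e, 0 < e < c -> u * (1 - e) <= x * v) -> u <= x * v.
Proof.
move=> /andP[c0 c1] x0 v0 H.
case: (lerP u (x * v)) => // h.
have xv0 : 0 <= x * v by apply: mulr_ge0.
have u0 : 0 < u by apply: le_lt_trans h.
pose e := c * (u - x * v) / (2 * u).
have he : u * e = c * (u - x * v) / 2.
  rewrite /e; field; apply/negP => /eqP; lra.
have q : (u - x * v) / (2 * u) <= 1 / 2.
  rewrite ler_pdivrMr; last lra.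
  have -> : 1 / 2 * (2 * u) = u by field.
  lra.
have e0 : 0 < e.
  rewrite /e; apply: divr_gt0; last lra.
  apply: mulr_gt0; lra.
have ec : e < c.
  have : e <= c / 2.
    rewrite /e -mulrA.
    have -> : c / 2 = c * (1 / 2) by rewrite mul1r.
    by apply: ler_wpM2l; [lra|].
  lra.
have := H e; rewrite e0 ec => /(_ erefl).
rewrite mulrBr mulr1 he => h2.
have : (u - x * v) * (1 - c / 2) <= 0 by lra.
have : 0 < (u - x * v) * (1 - c / 2) by apply: mulr_gt0; lra.
lra.
Qed.

Section Prob.
Context {d : measure_display} {T : measurableType d} {R : realType}.
Variable P : probability T R.
Variables (p alpha lambda tau : nat -> T -> R) (H0 : pred nat).

Local Notation filt := (filt p alpha lambda tau).

Hypothesis mp : forall j, (1 <= j)%N -> measurable_fun setT (p j).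
Hypothesis p01 : forall j w, (1 <= j)%N -> 0 <= p j w <= 1.
Hypothesis pred : forall j, (1 <= j)%N ->
     [/\ filt_measurable p alpha lambda tau j.-1 (alpha j),
         filt_measurable p alpha lambda tau j.-1 (lambda j) &
         filt_measurable p alpha lambda tau j.-1 (tau j)].
Hypothesis cuc : cond_unif_conservative P p alpha lambda tau H0.

Definition pr (A : set T) : R := fine (P A).

Lemma prE A : measurable A -> P A = (pr A)%:E.
Proof.
move=> mA; rewrite /pr fineK // ge0_fin_numE //.
by apply: le_lt_trans (probability_le1 P mA) _; rewrite ltry.
Qed.

Lemma pr_ge0 A : 0 <= pr A.
Proof. exact: fine_ge0. Qed.

Lemma pr_le1 A : measurable A -> pr A <= 1.
Proof. by move=> mA; rewrite -lee_fin -prE //; exact: probability_le1. Qed.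

Lemma pr_le A B : measurable A -> measurable B -> A `<=` B -> pr A <= pr B.
Proof.
move=> mA mB AB; rewrite -lee_fin -!prE //.
by apply: le_measure => //; rewrite inE.
Qed.

Lemma meas_ple j c : (1 <= j)%N -> measurable [set w | p j w <= c].
Proof. by move=> j1; apply: (meas_le (mp j1)); exact: measurable_cst. Qed.

Lemma fmeas t A : filt t A -> measurable A.
Proof. exact: (filt_meas mp pred). Qed.

Lemma SU0 j D y t : (1 <= j)%N -> H0 j -> filt j.-1 D -> 0 < y < 1 -> 0 < t < 1 ->
  pr ([set w | p j w <= y * t] `&` D) <= y * pr ([set w | p j w <= t] `&` D).
Proof.
move=> j1 hj hD hy ht.
have := cuc j1 hj hy ht hD.
have -> : [set w | p j w / t <= y] `&` ([set w | p j w <= t] `&` D)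
    = [set w | p j w <= y * t] `&` D.
  apply/seteqP; split => w /=.
  - by move=> [h1 [_ h2]]; split => //; rewrite -ler_pdivrMr //; case/andP: ht.
  - move=> [h1 h2]; split; first by rewrite ler_pdivrMr //; case/andP: ht.
    split => //; apply: (le_trans h1).
    by case/andP: hy => y0 y1; case/andP: ht => t0 t1; rewrite ler_piMl //; lra.
have mD := fmeas hD.
rewrite !prE; [|exact: measurableI _ _ (meas_ple _ j1) mD|exact: measurableI _ _ (meas_ple _ j1) mD].
by rewrite -EFinM lee_fin.
Qed.

Lemma SU j D x t : (1 <= j)%N -> H0 j -> filt j.-1 D -> 0 <= x <= 1 -> 0 < t <= 1 ->
  pr ([set w | p j w <= x * t] `&` D) <= x * pr ([set w | p j w <= t] `&` D).
Proof.
move=> j1 hj hD /andP[x0 x1] /andP[t0 t1].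
have mD := fmeas hD.
have mS c := measurableI _ _ (meas_ple c j1) mD.
have v0 := pr_ge0 ([set w | p j w <= t] `&` D).
have v1 := pr_le1 (mS t).
have mid : forall x', 0 < x' < 1 ->
    pr ([set w | p j w <= x' * t] `&` D) <= x' * pr ([set w | p j w <= t] `&` D).
  move=> x' /andP[x'0 x'1].
  apply: (@lim_aux _ _ _ _ (1 - x')) => //; first lra; first lra.
  move=> e /andP[e0 e1].
  have he : 0 < 1 - e by lra.
  have := @SU0 j D (x' / (1 - e)) (t * (1 - e)) j1 hj hD.
  have -> : x' / (1 - e) * (t * (1 - e)) = x' * t.
    by field; apply/negP => /eqP; lra.
  have hy : 0 < x' / (1 - e) < 1.
    apply/andP; split; first by apply: divr_gt0.
    by rewrite ltr_pdivrMr // mul1r; lra.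
  have ht : 0 < t * (1 - e) < 1.
    apply/andP; split; first by apply: mulr_gt0.
    have : t * (1 - e) <= 1 * (1 - e) by apply: ler_wpM2r; lra.
    lra.
  move=> /(_ hy ht) h.
  have h2 : pr ([set w | p j w <= t * (1 - e)] `&` D) <= pr ([set w | p j w <= t] `&` D).
    apply: pr_le => // w /= [h3 h4]; split => //; apply: (le_trans h3).
    by rewrite ger_pMr //; lra.
  have h3 : x' / (1 - e) * pr ([set w | p j w <= t * (1 - e)] `&` D)
       <= x' / (1 - e) * pr ([set w | p j w <= t] `&` D).
    by apply: ler_wpM2l => //; apply: divr_ge0; lra.
  have := le_trans h h3.
  rewrite -ler_pdivlMr // => h4; apply: (le_trans h4).
  by rewrite mulrAC.
case: (ltrP 0 x) => hx.
  case: (ltrP x 1) => hx1; first by apply: mid; rewrite hx hx1.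
  have -> : x = 1 by lra.
  by rewrite !mul1r.
have -> : x = 0 by lra.
rewrite !mul0r.
set u := pr _.
case: (lerP u 0) => // u0.
have u1 : u <= 1 by apply: pr_le1; exact: mS.
have h1 : u <= pr ([set w | p j w <= (u / 2) * t] `&` D).
  apply: pr_le; [exact: mS|exact: mS|].
  move=> w /= [h3 h4]; split => //; apply: (le_trans h3).
  by apply: mulr_ge0 => //; [apply: divr_ge0; lra | lra].
have := mid (u / 2); rewrite (_ : 0 < u / 2 < 1); last by apply/andP; split; lra.
move=> /(_ erefl) h2.
have h3 : u / 2 * pr ([set w | p j w <= t] `&` D) <= u / 2 * 1.
  by apply: ler_wpM2l => //; lra.
lra.
Qed.

End Prob.


Section CLsec.
Context {d : measure_display} {T : measurableType d} {R : realType}.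
Variable P : probability T R.
Variables (p alpha lambda tau : nat -> T -> R) (H0 : pred nat).

Local Notation filt := (filt p alpha lambda tau).
Local Notation pr := (pr P).

Hypothesis mp : forall j, (1 <= j)%N -> measurable_fun setT (p j).
Hypothesis p01 : forall j w, (1 <= j)%N -> 0 <= p j w <= 1.
Hypothesis pred : forall j, (1 <= j)%N ->
     [/\ filt_measurable p alpha lambda tau j.-1 (alpha j),
         filt_measurable p alpha lambda tau j.-1 (lambda j) &
         filt_measurable p alpha lambda tau j.-1 (tau j)].
Hypothesis cuc : cond_unif_conservative P p alpha lambda tau H0.

Lemma CL j D a l t : (1 <= j)%N -> H0 j -> filt j.-1 D ->
  0 <= a -> a <= l -> l < t -> t <= 1 ->
  pr ([set w | p j w <= a] `&` D) * (t - l)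
    <= a * pr ([set w | (l < p j w) && (p j w <= t)] `&` D).
Proof.
move=> j1 hj hD a0 al lt t1.
have t0 : 0 < t by lra.
have mD := fmeas mp pred hD.
have mS c := measurableI _ _ (meas_ple mp c j1) mD.
have mE : measurable ([set w | (l < p j w) && (p j w <= t)] `&` D).
  apply: measurableI => //.
  have -> : [set w | (l < p j w) && (p j w <= t)] =
     [set w | l < p j w] `&` [set w | p j w <= t].
    by apply/seteqP; split => w /=; [move/andP|move=> [-> ->]].
  apply: measurableI; last exact: meas_ple.
  by apply: meas_lt; [exact: measurable_cst | exact: mp].
set S := pr ([set w | p j w <= t] `&` D).
set L := pr ([set w | p j w <= l] `&` D).
set E := pr ([set w | (l < p j w) && (p j w <= t)] `&` D).
set A := pr ([set w | p j w <= a] `&` D).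
have hS : S = L + E.
  have : P ([set w | p j w <= t] `&` D) =
         (P ([set w | p j w <= l]%R `&` D) + P ([set w | (l < p j w)%R && (p j w <= t)%R] `&` D))%E.
    rewrite -measureU //.
    - congr (P _); apply/seteqP; split => w /=.
      + move=> [h1 h2]; case: (lerP (p j w) l) => h3.
          by left.
        by right; split => //; apply/andP; split.
      + case => -[h1 h2]; split => //; first lra.
        by case/andP: h1.
    - apply/seteqP; split => w //= [[h1 _] [/andP[h2 _] _]]; lra.
  by rewrite !(prE P) // -EFinD => -[].
have hA : A <= (a / t) * S.
  have := SU mp pred cuc (x := a / t) (t := t) j1 hj hD.
  rewrite divfK ?(gt_eqF t0) //.
  apply.
    apply/andP; split; first by apply: divr_ge0 => //; lra.
    by rewrite ler_pdivrMr // mul1r; lra.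
  by rewrite t0 t1.
have hL : L <= (l / t) * S.
  have := SU mp pred cuc (x := l / t) (t := t) j1 hj hD.
  rewrite divfK ?(gt_eqF t0) //.
  apply.
    apply/andP; split; first by apply: divr_ge0; lra.
    by rewrite ler_pdivrMr // mul1r; lra.
  by rewrite t0 t1.
have h1 : t * A <= a * S.
  by rewrite mulrC -ler_pdivlMr // mulrAC.
have h2 : t * L <= l * S.
  by rewrite mulrC -ler_pdivlMr // mulrAC.
rewrite -(ler_pM2l t0).
have S0 : 0 <= S by exact: pr_ge0.
have k1 : t * A * (t - l) <= a * S * (t - l) by apply: ler_wpM2r => //; lra.
have k2 : a * (t * L) <= a * (l * S) by apply: ler_wpM2l.
rewrite hS in k1 k2.
nra.
Qed.

End CLsec.

Import measurable_realfun.

Lemma ind1 (T : Type) (R : realType) (A : set T) w : A w -> \1_A w = 1 :> R.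
Proof. by move=> Aw; rewrite indicE mem_set. Qed.

Lemma ind0 (T : Type) (R : realType) (A : set T) w : ~ A w -> \1_A w = 0 :> R.
Proof. by move=> Aw; rewrite indicE memNset. Qed.
Arguments ind0 {T R A w} _.
Arguments ind1 {T R A w} _.

Lemma mEFin d (T : measurableType d) (R : realType) (g : T -> R) :
  measurable_fun setT g -> measurable_fun setT (fun w => (g w)%:E).
Proof. by move=> mg; exact: (measurable_realfun.measurable_EFinP setT g).2 mg. Qed.

Section KLsec.
Context {d : measure_display} {T : measurableType d} {R : realType}.
Variable P : probability T R.
Variables (p alpha lambda tau : nat -> T -> R) (H0 : pred nat).

Local Notation filt := (filt p alpha lambda tau).
Local Notation pr := (pr P).

Hypothesis mp : forall j, (1 <= j)%N -> measurable_fun setT (p j).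
Hypothesis p01 : forall j w, (1 <= j)%N -> 0 <= p j w <= 1.
Hypothesis pred : forall j, (1 <= j)%N ->
     [/\ filt_measurable p alpha lambda tau j.-1 (alpha j),
         filt_measurable p alpha lambda tau j.-1 (lambda j) &
         filt_measurable p alpha lambda tau j.-1 (tau j)].
Hypothesis cuc : cond_unif_conservative P p alpha lambda tau H0.
Hypothesis ha0 : forall j w, (1 <= j)%N -> 0 <= alpha j w.
Hypothesis ht1 : forall j w, (1 <= j)%N -> tau j w <= 1.
Hypothesis hord : forall j w, (1 <= j)%N -> lambda j w < tau j w /\ alpha j w <= lambda j w.

Definition cc j w := alpha j w / (tau j w - lambda j w).
Definition Ev j := [set w | (lambda j w < p j w) && (p j w <= tau j w)].

Lemma cc_ge0 j w : (1 <= j)%N -> 0 <= cc j w.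
Proof.
move=> j1; apply: divr_ge0; first exact: ha0.
by case: (hord w j1) => h _; lra.
Qed.

Lemma meas_cc j : (1 <= j)%N -> measurable_fun setT (cc j).
Proof.
move=> j1; case: (pred_meas mp pred j1) => ma ml mt.
have -> : cc j = (fun w => alpha j w * (tau j w - lambda j w) `^ (-1)).
  apply/funext => w; rewrite /cc powR_inv1 //.
  by case: (hord w j1) => h _; lra.
apply: measurable_funM => //.
apply: (measurableT_comp (measurable_powR _)).
exact: measurable_funB.
Qed.

Lemma meas_Ev j : (1 <= j)%N -> measurable (Ev j).
Proof.
move=> j1; case: (pred_meas mp pred j1) => ma ml mt.
have -> : Ev j = [set w | lambda j w < p j w] `&` [set w | p j w <= tau j w].
  by apply/seteqP; split => w /=; [move/andP|move=> [h1 h2]; exact/andP].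
by apply: measurableI; [apply: meas_lt|apply: meas_le]; try exact: mp.
Qed.

Lemma meas_Rev j : (1 <= j)%N -> measurable (Rev p alpha j).
Proof.
move=> j1; case: (pred_meas mp pred j1) => ma ml mt.
by apply: meas_le; try exact: mp.
Qed.

Lemma sum_atom t (F : T -> R) w :
  (F w)%:E = (\sum_(s : {ffun 'I_t -> bool * bool * bool})
                 (F w * \1_(Atom p alpha lambda tau s) w)%:E)%E.
Proof.
rewrite (bigD1 (sig p alpha lambda tau t w)) //= big1 ?adde0.
  by rewrite ind1 ?mulr1.
move=> s hs; rewrite ind0 ?mulr0 //.
by move=> hw; move: hs; rewrite /Atom /= in hw; rewrite hw eqxx.
Qed.

Lemma KL j B : (1 <= j)%N -> H0 j -> filt j.-1 B ->
  (P (B `&` Rev p alpha j) <=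
     \int[P]_w (\1_B w * (cc j w * \1_(Ev j) w))%:E)%E.
Proof.
move=> j1 hj hB.
set t := j.-1.
have mB := fmeas mp pred hB.
have mX : measurable (B `&` Rev p alpha j) by apply: measurableI => //; exact: meas_Rev.
have mAt : forall s : {ffun 'I_t -> bool * bool * bool}, measurable (Atom p alpha lambda tau s).
  by move=> s; apply: (fmeas mp pred); exact: atom_filt.
rewrite -(setIT (B `&` Rev p alpha j)) -integral_indic //.
under eq_integral do rewrite (sum_atom t).
under [X in (_ <= X)%E]eq_integral => w _ do rewrite (sum_atom t (fun w => \1_B w * (cc j w * \1_(Ev j) w)) w).
have m1 : forall s : {ffun 'I_t -> bool * bool * bool}, measurable_fun setT
    (fun w => ((\1_(B `&` Rev p alpha j) w * \1_(Atom p alpha lambda tau s) w : R))%:E).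
  move=> s; apply: (mEFin (g := fun w => \1_(B `&` Rev p alpha j) w * \1_(Atom p alpha lambda tau s) w)).
  apply: measurable_funM; exact: measurable_realfun.measurable_indic.
have n1 : forall (s : {ffun 'I_t -> bool * bool * bool}) w, setT w ->
    (0 <= ((\1_(B `&` Rev p alpha j) w * \1_(Atom p alpha lambda tau s) w : R))%:E)%E.
  by move=> s w _; rewrite lee_fin; apply: mulr_ge0; rewrite indicE.
have m2 : forall s : {ffun 'I_t -> bool * bool * bool}, measurable_fun setT
    (fun w => ((\1_B w * (cc j w * \1_(Ev j) w) * \1_(Atom p alpha lambda tau s) w : R))%:E).
  move=> s; apply: (mEFin (g := fun w => \1_B w * (cc j w * \1_(Ev j) w) * \1_(Atom p alpha lambda tau s) w)).
  apply: measurable_funM; last exact: measurable_realfun.measurable_indic.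
  apply: measurable_funM; first exact: measurable_realfun.measurable_indic.
  apply: measurable_funM; first exact: meas_cc.
  exact: measurable_realfun.measurable_indic (meas_Ev j1).
have n2 : forall (s : {ffun 'I_t -> bool * bool * bool}) w, setT w ->
    (0 <= ((\1_B w * (cc j w * \1_(Ev j) w) * \1_(Atom p alpha lambda tau s) w : R))%:E)%E.
  move=> s w _; rewrite lee_fin; apply: mulr_ge0; last by rewrite indicE.
  apply: mulr_ge0; first by rewrite indicE.
  by apply: mulr_ge0; [exact: cc_ge0 | rewrite indicE].
rewrite ge0_integral_sum // ge0_integral_sum //.
apply: lee_sum => s _.
set A := Atom p alpha lambda tau s.
have [[w0 Aw0]|A0] := pselect (exists w0, A w0); last first.
  rewrite integral0_eq; last first.
    move=> w _; rewrite (@ind0 _ R A w) ?mulr0 // => Aw; by apply: A0; exists w.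
  apply: integral_ge0 => w _; exact: n2.
have hsame : forall w, A w -> [/\ alpha j w = alpha j w0, lambda j w = lambda j w0
    & tau j w = tau j w0].
  move=> w Aw; have hs : same p alpha lambda tau t w w0.
    by apply: sig_same; rewrite Aw Aw0.
  case: (pred j1) => ma ml mt.
  by split; apply: (filt_fun_eq _ hs).
set a0 := alpha j w0; set l0 := lambda j w0; set t0 := tau j w0.
have hD : filt t (B `&` A) by apply: filtI => //; exact: atom_filt.
have mD : measurable (B `&` A) := fmeas mp pred hD.
rewrite [X in (X <= _)%E](eq_integral (fun w => (\1_([set w | p j w <= a0] `&` (B `&` A)) w)%:E)); last first.
  move=> w _; congr (_%:E).
  have [Aw|nAw] := pselect (A w); last first.
    by rewrite (ind0 nAw) mulr0 ind0 // => -[_ []].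
  rewrite (ind1 Aw) mulr1; case: (hsame w Aw) => e1 _ _.
  have [Xw|nXw] := pselect ((B `&` Rev p alpha j) w).
    rewrite !ind1 //; case: Xw => Bw Rw; split => //=; rewrite /a0 -e1; exact: Rw.
  rewrite !ind0 // => -[/= h [Bw _]]; apply: nXw; split => //.
  by rewrite /Rev /= e1.
rewrite [X in (_ <= X)%E](eq_integral (fun w => ((cc j w0)%:E *
      (\1_([set w | (l0 < p j w) && (p j w <= t0)] `&` (B `&` A)) w)%:E)%E)); last first.
  move=> w _; rewrite -EFinM; congr (_%:E).
  have [Aw|nAw] := pselect (A w); last first.
    by rewrite (ind0 nAw) mulr0 ind0 ?mulr0 // => -[_ []].
  rewrite (ind1 Aw) mulr1; case: (hsame w Aw) => e1 e2 e3.
  have e4 : cc j w = cc j w0 by rewrite /cc e1 e2 e3.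
  have [Bw|nBw] := pselect (B w); last first.
    by rewrite (ind0 nBw) mul0r ind0 ?mulr0 // => -[_ []].
  rewrite (ind1 Bw) mul1r e4; congr (_ * _).
  have [Ew|nEw] := pselect (Ev j w).
    by rewrite !ind1 //; split => //=; rewrite /l0 /t0 -e2 -e3.
  rewrite !ind0 // => -[/= h _]; apply: nEw; rewrite /Ev /= e2 e3; exact: h.
have mE : measurable [set w | (l0 < p j w) && (p j w <= t0)].
  have -> : [set w | (l0 < p j w) && (p j w <= t0)] =
     [set w | l0 < p j w] `&` [set w | p j w <= t0].
    by apply/seteqP; split => w /=; [move/andP|move=> [h1 h2]; exact/andP].
  by apply: measurableI; [apply: meas_lt|apply: meas_le]; try exact: mp; exact: measurable_cst.
have nn : forall w, setT w ->
    (0 <= (\1_([set w | (l0 < p j w) && (p j w <= t0)] `&` (B `&` A)) w : R)%:E)%E.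
  by move=> w _; rewrite lee_fin indicE.
have mm : measurable_fun setT
    (fun w => (\1_([set w | (l0 < p j w) && (p j w <= t0)] `&` (B `&` A)) w : R)%:E).
  apply: (mEFin (g := \1_([set w | (l0 < p j w) && (p j w <= t0)] `&` (B `&` A)))).
  exact: measurable_realfun.measurable_indic (measurableI _ _ mE mD).
rewrite (ge0_integralZl_EFin P measurableT nn mm (cc_ge0 w0 j1)).
have mE' := measurableI _ _ mE mD.
have mA' := measurableI _ _ (meas_ple mp a0 j1) mD.
rewrite !integral_indic // !setIT.
have e1 : (P : {measure set T -> \bar R}) ([set w | (l0 < p j w) && (p j w <= t0)] `&` (B `&` A))
   = (pr ([set w | (l0 < p j w) && (p j w <= t0)] `&` (B `&` A)))%:E := prE P mE'.
have e2 : (P : {measure set T -> \bar R}) ([set w | p j w <= a0] `&` (B `&` A))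
   = (pr ([set w | p j w <= a0] `&` (B `&` A)))%:E := prE P mA'.
rewrite e1 e2.
rewrite -EFinM lee_fin.
case: (hord w0 j1) => hlt hal.
have := CL mp pred cuc (a := a0) (l := l0) (t := t0) j1 hj hD (ha0 w0 j1) hal hlt (ht1 w0 j1).
have hz : 0 < t0 - l0 by rewrite /t0 /l0; lra.
by rewrite /cc -/a0 -/l0 -/t0 mulrAC ler_pdivlMr.
Qed.

End KLsec.


Lemma comp_stop d (T : measurableType d) d' (U : measurableType d')
  (Ts : T -> nat) (F : nat -> T -> U) :
  (forall n, measurable [set w | Ts w = n]) ->
  (forall n, measurable_fun setT (F n)) ->
  measurable_fun setT (fun w => F (Ts w) w).
Proof.
move=> mT mF _ Y mY; rewrite setTI.
have -> : (fun w => F (Ts w) w) @^-1` Y =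
    \bigcup_n ([set w | Ts w = n] `&` (F n @^-1` Y)).
  apply/seteqP; split => w /=.
  - by move=> h; exists (Ts w).
  - by move=> [n _ [/= e h]]; rewrite /preimage /= e.
apply: bigcupT_measurable => n; apply: measurableI => //.
by have := mF n measurableT Y mY; rewrite setTI.
Qed.

Lemma msum_nat d (T : measurableType d) (R : realType) (f : nat -> T -> R) n :
  (forall j, (1 <= j)%N -> measurable_fun setT (f j)) ->
  measurable_fun setT (fun w => \sum_(1 <= j < n.+1) f j w).
Proof.
move=> hf; elim: n => [|n IH].
  have -> : (fun w => \sum_(1 <= j < 1) f j w) = cst 0.
    by apply/funext => w; rewrite big_geq.
  exact: measurable_cst.
have -> : (fun w => \sum_(1 <= j < n.+2) f j w) =
   (fun w => \sum_(1 <= j < n.+1) f j w) \+ f n.+1.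
  by apply/funext => w; rewrite big_nat_recr.
by apply: measurable_funD => //; exact: hf.
Qed.

Lemma indb (T : Type) (R : realType) (b : T -> bool) w :
  \1_([set w | b w]) w = (b w)%:R :> R.
Proof.
case: (boolP (b w)) => h; first by rewrite ind1.
by rewrite ind0 //= => h'; move: h; rewrite h'.
Qed.

Lemma ser_fin (R : realType) (f : nat -> \bar R) N :
  (forall k, (0 <= f k)%E) -> (forall k, (N <= k)%N -> f k = 0%E) ->
  (\sum_(k <oo) f k = \sum_(0 <= k < N) f k)%E.
Proof.
move=> f0 fN.
rewrite (nneseries_split 0 N) // add0n eseries0 ?adde0 //.
by move=> i hi _; exact: fN.
Qed.


Section Main.
Context {d : measure_display} {T : measurableType d} {R : realType}.
Variable P : probability T R.
Variables (p alpha lambda tau : nat -> T -> R) (H0 : pred nat) (a : R) (Ts : T -> nat).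

Local Notation filt := (filt p alpha lambda tau).

Hypothesis ha : 0 < a.
Hypothesis mp : forall j, (1 <= j)%N -> measurable_fun setT (p j).
Hypothesis p01 : forall j w, (1 <= j)%N -> 0 <= p j w <= 1.
Hypothesis rng : forall j w, (1 <= j)%N ->
     [/\ 0 <= alpha j w <= 1, 0 <= lambda j w <= 1 & 0 <= tau j w <= 1].
Hypothesis pred : forall j, (1 <= j)%N ->
     [/\ filt_measurable p alpha lambda tau j.-1 (alpha j),
         filt_measurable p alpha lambda tau j.-1 (lambda j) &
         filt_measurable p alpha lambda tau j.-1 (tau j)].
Hypothesis cuc : cond_unif_conservative P p alpha lambda tau H0.
Hypothesis hord0 : forall j w, (1 <= j)%N -> tau j w > lambda j w /\ lambda j w >= alpha j w.
Hypothesis hst : stopping_time p alpha lambda tau Ts.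

Lemma ha0 j w : (1 <= j)%N -> 0 <= alpha j w.
Proof. by move=> j1; case: (rng w j1) => /andP[]. Qed.
Lemma ht1 j w : (1 <= j)%N -> tau j w <= 1.
Proof. by move=> j1; case: (rng w j1) => _ _ /andP[]. Qed.
Lemma hord j w : (1 <= j)%N -> lambda j w < tau j w /\ alpha j w <= lambda j w.
Proof. exact: hord0. Qed.

Lemma mTs n : measurable [set w | Ts w = n].
Proof. have h : forall m, filt m [set w | Ts w = m] := hst. exact: (fmeas mp pred (h n)). Qed.

Definition Bs j := [set w | (j <= Ts w)%N].

Lemma Bs_filt j : (1 <= j)%N -> filt j.-1 (Bs j).
Proof.
move=> j1.
have -> : Bs j = ~` (\bigcup_(n in [set n | (n < j)%N]) [set w | Ts w = n]).
  apply/seteqP; split => w /=.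
  - by move=> h [n /= nj e]; move: nj; rewrite -e ltnNge h.
  - move=> h; rewrite /Bs /= leqNgt; apply/negP => hlt; apply: h.
    by exists (Ts w).
apply: filtC.
apply: (@bigcup_measurable _ (g_sigma_algebraType (filt_gen p alpha lambda tau j.-1))).
have h : forall m, filt m [set w | Ts w = m] := hst.
move=> n /= nj; apply: (filt_mono (t := n)); last exact: h.
by rewrite -ltnS prednK.
Qed.

Lemma mBs j : (1 <= j)%N -> measurable (Bs j).
Proof. by move=> j1; exact: (fmeas mp pred (Bs_filt j1)). Qed.

Definition gg j w : \bar R :=
  if (0 < j)%N && H0 j then (\1_(Bs j `&` Rev p alpha j) w)%:E else 0%E.
Definition hh j w : \bar R :=
  if (0 < j)%N then (\1_(Bs j) w * (cc alpha lambda tau j w * \1_(Ev p lambda tau j) w))%:E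
  else 0%E.

Lemma hh_ge0 j w : (0 <= hh j w)%E.
Proof.
rewrite /hh; case: ifP => // j1; rewrite lee_fin; apply: mulr_ge0; first by rewrite indicE.
by apply: mulr_ge0; [exact: (cc_ge0 ha0 hord) | rewrite indicE].
Qed.

Lemma gg_ge0 j w : (0 <= gg j w)%E.
Proof. by rewrite /gg; case: ifP => // _; rewrite lee_fin indicE. Qed.

Lemma meas_gg j : measurable_fun setT (gg j).
Proof.
case hc : ((0 < j)%N && H0 j); rewrite /gg hc; last exact: measurable_cst.
case/andP: hc => j1 _.
apply: (mEFin (g := \1_(Bs j `&` Rev p alpha j))).
apply: measurable_indic; apply: measurableI; first exact: mBs.
exact: (meas_Rev mp pred j1).
Qed.

Lemma meas_hh j : measurable_fun setT (hh j).
Proof.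
case j1 : (0 < j)%N; rewrite /hh j1; last exact: measurable_cst.
apply: (mEFin (g := fun w => \1_(Bs j) w * (cc alpha lambda tau j w * \1_(Ev p lambda tau j) w))).
apply: measurable_funM; first exact: measurable_indic (mBs j1).
apply: measurable_funM; first exact: (meas_cc mp pred hord).
exact: measurable_indic (meas_Ev mp pred j1).
Qed.

Lemma int_gh j : (\int[P]_w gg j w <= \int[P]_w hh j w)%E.
Proof.
case hc : ((0 < j)%N && H0 j); rewrite /gg hc; last first.
  by rewrite integral0_eq //; apply: integral_ge0 => w _; exact: hh_ge0.
case/andP: hc => j1 hj.
rewrite integral_indic //; last by apply: measurableI; [exact: mBs|exact: (meas_Rev mp pred j1)].
rewrite setIT /hh j1.
exact: (KL mp pred cuc ha0 ht1 hord j1 hj (Bs_filt j1)).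
Qed.

Definition num n w := \sum_(1 <= j < n.+1)
  alpha j w * ((lambda j w < p j w) && (p j w <= tau j w))%:R / (tau j w - lambda j w).

Lemma ser_g w : (\sum_(j <oo) gg j w = ((nfalse_rej p alpha H0 (Ts w) w)%:R)%:E)%E.
Proof.
rewrite (@ser_fin _ _ (Ts w).+1); first last.
- move=> k hk; rewrite /gg; case: ifP => // /andP[k1 _].
  rewrite ind0 // => -[h _]; move: hk; rewrite /Bs /= in h.
  by rewrite ltnNge h.
- by move=> k; exact: gg_ge0.
rewrite big_ltn // {1}/gg /= add0e.
rewrite /nfalse_rej natr_sum -sumEFin [RHS]big_mkcond /=.
apply: eq_big_nat => k /andP[k1 kT].
rewrite /gg k1 /=; case: (H0 k) => //; congr (_%:E).
have Bw : Bs k w by rewrite /Bs /=; rewrite ltnS in kT.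
case: (boolP (p k w <= alpha k w)) => h.
  by rewrite ind1.
rewrite ind0 // => -[_ h']; move: h; rewrite /Rev /= in h'; by rewrite h'.
Qed.

Lemma ser_h w : (\sum_(j <oo) hh j w = (num (Ts w) w)%:E)%E.
Proof.
rewrite (@ser_fin _ _ (Ts w).+1); first last.
- move=> k hk; rewrite /hh; case: ifP => // k1.
  rewrite ind0 ?mul0r // => h; move: hk; rewrite /Bs /= in h.
  by rewrite ltnNge h.
- by move=> k; exact: hh_ge0.
rewrite big_ltn // {1}/hh /= add0e.
rewrite /num -sumEFin.
apply: eq_big_nat => k /andP[k1 kT].
rewrite /hh k1 /=; congr (_%:E).
have Bw : Bs k w by rewrite /Bs /=; rewrite ltnS in kT.
by rewrite ind1 // mul1r /Ev indb /cc mulrAC.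
Qed.

Lemma meas_num n : measurable_fun setT (num n).
Proof.
apply: msum_nat => j j1.
have -> : (fun w => alpha j w * ((lambda j w < p j w) && (p j w <= tau j w))%:R
    / (tau j w - lambda j w)) = cc alpha lambda tau j \* \1_(Ev p lambda tau j).
  by apply/funext => w /=; rewrite /Ev indb /cc mulrAC.
apply: measurable_funM; first exact: (meas_cc mp pred hord).
exact: measurable_indic (meas_Ev mp pred j1).
Qed.

Lemma meas_nrej n : measurable_fun setT (fun w => (nrej p alpha n w)%:R : R).
Proof.
have -> : (fun w => (nrej p alpha n w)%:R : R) =
    (fun w => \sum_(1 <= j < n.+1) \1_(Rev p alpha j) w).
  by apply/funext => w; rewrite /nrej natr_sum; apply: eq_bigr => j _; rewrite /Rev indb.
apply: msum_nat => j j1; apply: measurable_indic; exact: (meas_Rev mp pred j1).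
Qed.

Lemma meas_nfalse n : measurable_fun setT (fun w => (nfalse_rej p alpha H0 n w)%:R : R).
Proof.
have -> : (fun w => (nfalse_rej p alpha H0 n w)%:R : R) =
    (fun w => \sum_(1 <= j < n.+1) (if H0 j then \1_(Rev p alpha j) w else 0)).
  apply/funext => w; rewrite /nfalse_rej natr_sum big_mkcond.
  by apply: eq_bigr => j _; case: (H0 j) => //; rewrite /Rev indb.
apply: msum_nat => j j1; case: (H0 j); last exact: measurable_cst.
apply: measurable_indic; exact: (meas_Rev mp pred j1).
Qed.

Lemma nf_le n w : (nfalse_rej p alpha H0 n w <= n)%N.
Proof.
rewrite /nfalse_rej big_mkcond.
have h : (\sum_(1 <= j < n.+1) (if H0 j then nat_of_bool (p j w <= alpha j w)%R else 0)
   <= \sum_(1 <= j < n.+1) 1)%N.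
  by apply: leq_sum => j _; case: (H0 j) => //; case: (_ <= _)%R.
by apply: (leq_trans h); rewrite sum_nat_const_nat subn1 muln1.
Qed.

Lemma nr_le n w : (nrej p alpha n w <= n)%N.
Proof.
rewrite /nrej.
have h : (\sum_(1 <= j < n.+1) nat_of_bool (p j w <= alpha j w)%R
   <= \sum_(1 <= j < n.+1) 1)%N.
  by apply: leq_sum => j _; case: (_ <= _)%R.
by apply: (leq_trans h); rewrite sum_nat_const_nat subn1 muln1.
Qed.

Hypothesis hT : (\int[P]_w ((Ts w)%:R)%:E < +oo)%E.
Hypothesis hfdp : forall t w, FDP_ADDIS p alpha lambda tau t w <= a.

Lemma max_ge1 (x : R) : 1 <= Num.max x 1.
Proof. by rewrite le_max lexx orbT. Qed.

Lemma num_le w : num (Ts w) w <= a * Num.max (nrej p alpha (Ts w) w)%:R 1.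
Proof.
have := hfdp (Ts w) w; rewrite /FDP_ADDIS ler_pdivrMr; last first.
  exact: lt_le_trans ltr01 (max_ge1 _).
done.
Qed.

Lemma mTsE : measurable_fun setT (fun w => ((Ts w)%:R : R)%:E).
Proof.
exact: (comp_stop (F := fun n (_ : T) => ((n%:R : R))%:E) mTs (fun n => measurable_cst _)).
Qed.

Lemma mEV : measurable_fun setT (fun w => ((nfalse_rej p alpha H0 (Ts w) w)%:R : R)%:E).
Proof.
apply: (comp_stop (F := fun n w => ((nfalse_rej p alpha H0 n w)%:R : R)%:E) mTs).
move=> n; apply: (mEFin (g := fun w => ((nfalse_rej p alpha H0 n w)%:R : R))).
exact: meas_nfalse.
Qed.

Lemma mER : measurable_fun setT (fun w => (Num.max (nrej p alpha (Ts w) w)%:R 1 : R)%:E).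
Proof.
apply: (comp_stop (F := fun n w => (Num.max (nrej p alpha n w)%:R 1 : R)%:E) mTs).
move=> n; apply: (mEFin (g := fun w => (Num.max (nrej p alpha n w)%:R 1 : R))).
apply: (measurable_maxr (f := fun w => ((nrej p alpha n w)%:R : R)) (g := cst 1)).
  exact: meas_nrej.
exact: measurable_cst.
Qed.

Lemma mNUM : measurable_fun setT (fun w => (num (Ts w) w)%:E).
Proof.
apply: (comp_stop (F := fun n w => (num n w)%:E) mTs).
move=> n; apply: (mEFin (g := num n)); exact: meas_num.
Qed.

Lemma EV_le : (\int[P]_w ((nfalse_rej p alpha H0 (Ts w) w)%:R)%:E <=
   a%:E * \int[P]_w (Num.max (nrej p alpha (Ts w) w)%:R 1)%:E)%E.
Proof.
under eq_integral => w _ do rewrite -ser_g.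
rewrite integral_nneseries //; last first.
  by move=> n w _; exact: gg_ge0.
  by move=> n; exact: meas_gg.
apply: (@le_trans _ _ (\sum_(n <oo) \int[P]_w hh n w)%E).
  apply: lee_nneseries => [n _ _|n _]; last exact: int_gh.
  by apply: integral_ge0 => w _; exact: gg_ge0.
rewrite -integral_nneseries //; first last.
  by move=> n w _; exact: hh_ge0.
  by move=> n; exact: meas_hh.
under eq_integral => w _ do rewrite ser_h.
have n1 : forall w, setT w -> (0 <= (Num.max (nrej p alpha (Ts w) w)%:R 1 : R)%:E)%E.
  by move=> w _; rewrite lee_fin; exact: le_trans ler01 (max_ge1 _).
rewrite -(ge0_integralZl_EFin P measurableT n1 mER (ltW ha)).
apply: ge0_le_integral => //.
- move=> w _; rewrite lee_fin /num; rewrite big_nat_cond; apply: sumr_ge0 => j /andP[/andP[j1 _] _].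
  apply: divr_ge0; first by apply: mulr_ge0; [exact: ha0|].
  by case: (hord w j1) => h _; lra.
- exact: mNUM.
- apply: (mEFin (g := fun w => a * Num.max (nrej p alpha (Ts w) w)%:R 1)).
  apply: measurable_funM; first exact: measurable_cst.
  exact: (measurable_realfun.measurable_EFinP setT _).1 mER.
- by move=> w _; rewrite -EFinM lee_fin; exact: num_le.
Qed.

End Main.

Unset Implicit Arguments.

Theorem theorem2 (d : measure_display) (T : measurableType d) (R : realType)
  (P : probability T R) (p alpha lambda tau : nat -> T -> R) (H0 : pred nat)
  (a eps : R) (Ts : T -> nat) :
  0 < a < 1 ->
  (* p-values *)
  (forall j, (1 <= j)%N -> measurable_fun setT (p j)) ->
  (forall j w, (1 <= j)%N -> 0 <= p j w <= 1) ->
  (* test levels in [0,1], predictable *)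
  (forall j w, (1 <= j)%N ->
     [/\ 0 <= alpha j w <= 1, 0 <= lambda j w <= 1 & 0 <= tau j w <= 1]) ->
  (forall j, (1 <= j)%N ->
     [/\ filt_measurable p alpha lambda tau j.-1 (alpha j),
         filt_measurable p alpha lambda tau j.-1 (lambda j) &
         filt_measurable p alpha lambda tau j.-1 (tau j)]) ->
  cond_unif_conservative P p alpha lambda tau H0 ->
  (forall j w, (1 <= j)%N -> tau j w > lambda j w /\ lambda j w >= alpha j w) ->
  0 < eps ->
  (forall j w, (1 <= j)%N -> tau j w - lambda j w > eps) ->
  stopping_time p alpha lambda tau Ts ->
  (\int[P]_w ((Ts w)%:R)%:E < +oo)%E ->
  (forall t w, FDP_ADDIS p alpha lambda tau t w <= a) ->
  let EV := (\int[P]_w ((nfalse_rej p alpha H0 (Ts w) w)%:R)%:E)%E in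
  let ER := (\int[P]_w ((Num.max (nrej p alpha (Ts w) w)%:R 1))%:E)%E in
  [/\ (EV < +oo)%E, (ER < +oo)%E & fine EV / fine ER <= a].
Proof.
move=> /andP[ha _] mp p01 rng pred cuc hord0 _ _ hst hT hfdp EV ER.
have hEV := EV_le ha mp rng pred cuc hord0 hst hfdp.
rewrite -/EV -/ER in hEV.
have mEVf := mEV H0 mp pred hst.
have mTsf := mTsE mp pred hst.
have mERf := mER mp pred hst.
have EVle : (EV <= \int[P]_w ((Ts w)%:R)%:E)%E.
  apply: (ge0_le_integral P measurableT _ mEVf mTsf).
  - by move=> w _; rewrite lee_fin.
  - by move=> w _; rewrite lee_fin ler_nat nf_le.
have h1 : (\int[P]_w (1%E : \bar R) = 1)%E.
  by rewrite -[RHS](probability_setT P) -[X in (_ = X)]mul1e -integral_cst.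
have m1 : measurable_fun setT (fun _ : T => (1%E : \bar R)) := measurable_cst _.
have ERle : (ER <= \int[P]_w ((Ts w)%:R)%:E + 1)%E.
  have n0 : forall w, setT w -> (0 <= ((Ts w)%:R : R)%:E)%E by move=> w _; rewrite lee_fin.
  have n1 : forall w : T, setT w -> (0 <= (1%E : \bar R))%E by [].
  rewrite -h1 -(ge0_integralD P measurableT n0 mTsf n1 m1).
  have mS : measurable_fun setT (fun w => (((Ts w)%:R : R)%:E + 1)%E).
    by apply: emeasurable_funD.
  apply: (ge0_le_integral P measurableT _ mERf mS).
  - by move=> w _; rewrite lee_fin; exact: le_trans ler01 (max_ge1 _).
  - move=> w _; rewrite -EFinD lee_fin ge_max; apply/andP; split.
      have := nr_le p alpha (Ts w) w; rewrite -(ler_nat R) => h; lra.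
    have : 0 <= (Ts w)%:R :> R by [].
    lra.
have ER1 : (1 <= ER)%E.
  rewrite -h1; apply: (ge0_le_integral P measurableT _ m1 mERf).
  - by [].
  - by move=> w _; rewrite lee_fin; exact: max_ge1.
have EV0 : (0 <= EV)%E by apply: integral_ge0 => w _; rewrite lee_fin.
have EVfin : (EV < +oo)%E by apply: le_lt_trans EVle hT.
have ERfin : (ER < +oo)%E.
  apply: le_lt_trans ERle _.
  by rewrite -(fineK (x := \int[P]_w ((Ts w)%:R)%:E)) ?ge0_fin_numE ?ltry //;
    apply: integral_ge0 => w _; rewrite lee_fin.
have EVf : EV \is a fin_num by rewrite ge0_fin_numE.
have ERf : ER \is a fin_num by rewrite ge0_fin_numE // (le_trans _ ER1).
split => //.
have ER1' : 1 <= fine ER by rewrite -lee_fin fineK.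
rewrite ler_pdivrMr; last lra.
by rewrite -lee_fin EFinM !fineK.
Qed.
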